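(* Let $(G,\cdot)$ be a loop with identity $e$ and $(H,\cdot)$ a non-trivial subloop of exponent $2$ (i.e. $ss=e$ for all $s\in H$) such that $(xs\cdot z)s=x(sz\cdot s)$ for all $x,z\in G$, $s\in H$. Then for every $s\in H$, the map $L_sR_s^{-1}$ is a second Smarandache semi-automorphism of $G_H$, i.e. $e(L_sR_s^{-1})=e$ and $(ty\cdot t)L_sR_s^{-1}=(tL_sR_s^{-1}\cdot yL_sR_s^{-1})\,tL_sR_s^{-1}$ for all $y\in G$, $t\in H$.
   Context: Juxtaposition binds more tightly than $\cdot$. Maps are written on the right and composed left to right; $xR_s=x\cdot s$, $xL_s=s\cdot x$. *)

(* Defs.v *)
(* A loop: a carrier with a binary operation, an identity element, and left and
   right divisions making every left translation L_a : x |-> a.x and every right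
   translation R_a : x |-> x.a a bijection (the division operations are their
   inverses). *)
Record Loop := {
  carrier :> Type;
  mul : carrier -> carrier -> carrier;
  e : carrier;
  ldiv : carrier -> carrier -> carrier;  (* ldiv a b = a \ b, i.e. b L_a^{-1} *)
  rdiv : carrier -> carrier -> carrier;  (* rdiv b a = b / a, i.e. b R_a^{-1} *)
  mul_e_l : forall x, mul e x = x;
  mul_e_r : forall x, mul x e = x;
  ldiv_mul : forall a x, ldiv a (mul a x) = x;
  mul_ldiv : forall a b, mul a (ldiv a b) = b;
  rdiv_mul : forall a x, rdiv (mul x a) a = x;
  mul_rdiv : forall a b, mul (rdiv b a) a = b
}.

Arguments mul {l}.
Arguments e {l}.
Arguments ldiv {l}.
Arguments rdiv {l}.

(* Translations (maps written on the right in the paper: x R_s = x.s, x L_s = s.x). *)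
Definition Lmap {G : Loop} (s x : G) : G := mul s x.
Definition Rmap {G : Loop} (s x : G) : G := mul x s.
Definition Rinv {G : Loop} (s x : G) : G := rdiv x s.

(* The map L_s R_s^{-1} (composition left to right): x |-> (s.x) R_s^{-1}. *)
Definition LRinv {G : Loop} (s : G) (x : G) : G := Rinv s (Lmap s x).

Definition subloop (G : Loop) (H : G -> Prop) : Prop :=
  H e /\
  (forall x y, H x -> H y -> H (mul x y)) /\
  (forall x y, H x -> H y -> H (ldiv x y)) /\
  (forall x y, H x -> H y -> H (rdiv x y)).

Definition second_S_semi_automorphism (G : Loop) (H : G -> Prop) (f : G -> G) : Prop :=
  f e = e /\
  forall (y t : G), H t -> f (mul (mul t y) t) = mul (mul (f t) (f y)) (f t).

(* Main.v *)
Require Import Defs.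

Theorem corollary3p3 (G : Loop) (H : G -> Prop) :
  subloop G H ->
  (exists s0, H s0 /\ s0 <> e) ->
  (forall s, H s -> mul s s = e) ->
  (forall (x z s : G), H s -> mul (mul (mul x s) z) s = mul x (mul (mul s z) s)) ->
  forall s, H s -> second_S_semi_automorphism G H (LRinv s).
Proof.
  intros [He [Hm _]] _ Hsq A s Hs.
  assert (Inv : forall u v, H v -> mul (mul u v) v = u).
  { intros u v Hv. pose proof (A u e v Hv) as E.
    rewrite mul_e_r, mul_e_r, Hsq, mul_e_r in E by exact Hv. exact E. }
  assert (F : forall x, LRinv s x = mul (mul s x) s).
  { intros x. unfold LRinv, Rinv, Lmap.
    pose proof (rdiv_mul G s (mul (mul s x) s)) as R.
    rewrite (Inv (mul s x) s Hs) in R. exact R. }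
  split.
  - rewrite F, mul_e_r. apply Hsq; exact Hs.
  - intros y t Ht. rewrite !F.
    set (a := mul (mul s t) s).
    assert (Ha : H a) by (apply Hm; [apply Hm|]; assumption).
    assert (E1 : mul s (mul (mul t y) t) = mul (mul (mul s t) y) t)
      by (symmetry; apply A; exact Ht).
    rewrite E1.
    assert (E2 : mul a (mul (mul s y) s) = mul (mul (mul s t) y) s).
    { rewrite <- A by exact Hs. unfold a. rewrite Inv by exact Hs. reflexivity. }
    rewrite E2. unfold a. rewrite <- A by exact Hs.
    rewrite (Inv _ s Hs). reflexivity.
Qed.
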